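(* Let $f,\tilde f,g,\tilde g,h,\tilde h,b,c$ be functions of two variables satisfying $b(u,v)=c(u,v)$, $g(u,v)=h(u,v)$, $\tilde g(u,v)=\tilde h(u,v)$. Let $q(n_1,n_2;y,z)$, $(n_1,n_2)\in\mathbb Z^2$, satisfy for all $y,z$ the 7-point equation $$f(q,q_{1,0})-\tilde f(q,q_{-1,0})+g(q,q_{0,1})-\tilde g(q,q_{0,-1})+h(q,q_{-1,-1})-\tilde h(q,q_{1,1})=0$$ at every site, together with the flows $$q_{,y}=b\bigl(q,-\tilde f(q,q_{-1,0})+g(q,q_{0,1})-\tilde h(q,q_{1,1})\bigr)=b\bigl(q,-f(q,q_{1,0})+\tilde g(q,q_{0,-1})-h(q,q_{-1,-1})\bigr),$$ $$q_{,z}=c\bigl(q,-\tilde f(q,q_{-1,0})-\tilde g(q,q_{0,-1})+h(q,q_{-1,-1})\bigr)=c\bigl(q,-f(q,q_{1,0})-g(q,q_{0,1})+\tilde h(q,q_{1,1})\bigr).$$ Fix an integer $j$ and set $u(2k)=q(k,j)$, $u(2k-1)=q(k,j+1)$ for $k\in\mathbb Z$. Then $u_{,t}:=u_{,y}+u_{,z}$ satisfies, at every $n\in\mathbb Z$ (both even and odd), the autonomous equation $$u_{,t}=b\bigl(u,-\tilde f(u,u_{-2})+g(u,u_{-1})-\tilde g(u,u_1)\bigr)+b\bigl(u,-f(u,u_2)-g(u,u_{-1})+\tilde g(u,u_1)\bigr),$$ where $u=u(n)$, $u_m=u(n+m)$.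
   Context: Notation: $q_{i,j}=q(n_1+i,n_2+j)$; subscripts ${,y},{,z},{,t}$ denote derivatives in $y,z,t$. *)

(* Defs.v *)
From Stdlib Require Import Reals ZArith.
From Coquelicot Require Import Coquelicot.
Open Scope R_scope.

Definition field2 := Z -> Z -> R -> R -> R.

(* u(2k) = q(k,j), u(2k-1) = q(k,j+1) (Z.div is floor division, so for
   n = 2k-1 we get (n+1)/2 = k). *)
Definition zigzag (q : field2) (j : Z) (n : Z) (y z : R) : R :=
  if Z.even n then q (n / 2)%Z j y z else q ((n + 1) / 2)%Z (j + 1)%Z y z.

(* Main.v *)
Require Import Defs.
From Stdlib Require Import Reals ZArith.
From Coquelicot Require Import Coquelicot.
Open Scope R_scope.

From Stdlib Require Import FunctionalExtensionality Lia.

Lemma zz_e (q : field2) j k : zigzag q j (2*k)%Z = q k j.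
Proof.
  extensionality y; extensionality z; unfold zigzag.
  assert (E : Z.even (2*k) = true) by (rewrite Z.even_mul; reflexivity). rewrite E.
  rewrite Z.mul_comm, Z.div_mul by lia. reflexivity.
Qed.

Lemma zz_o (q : field2) j k : zigzag q j (2*k-1)%Z = q k (j+1)%Z.
Proof.
  extensionality y; extensionality z; unfold zigzag.
  assert (E : Z.even (2*k-1) = false) by (rewrite Z.even_sub, Z.even_mul; reflexivity). rewrite E.
  replace (2*k-1+1)%Z with (k*2)%Z by ring.
  rewrite Z.div_mul by lia. reflexivity.
Qed.

Theorem mainTheorem2
  (f ft g gt h ht b c : R -> R -> R)
  (hbc : forall s w, b s w = c s w)
  (hgh : forall s w, g s w = h s w)
  (hgtht : forall s w, gt s w = ht s w)
  (q : Z -> Z -> R -> R -> R)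
  (Hlat : forall (n1 n2 : Z) (y z : R),
     f (q n1 n2 y z) (q (n1 + 1)%Z n2 y z) - ft (q n1 n2 y z) (q (n1 - 1)%Z n2 y z)
     + g (q n1 n2 y z) (q n1 (n2 + 1)%Z y z) - gt (q n1 n2 y z) (q n1 (n2 - 1)%Z y z)
     + h (q n1 n2 y z) (q (n1 - 1)%Z (n2 - 1)%Z y z)
     - ht (q n1 n2 y z) (q (n1 + 1)%Z (n2 + 1)%Z y z) = 0)
  (Hy : forall (n1 n2 : Z) (y z : R),
     is_derive (fun y' => q n1 n2 y' z) y
       (b (q n1 n2 y z)
          (- ft (q n1 n2 y z) (q (n1 - 1)%Z n2 y z)
           + g (q n1 n2 y z) (q n1 (n2 + 1)%Z y z)
           - ht (q n1 n2 y z) (q (n1 + 1)%Z (n2 + 1)%Z y z))))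
  (Hy' : forall (n1 n2 : Z) (y z : R),
     b (q n1 n2 y z)
       (- ft (q n1 n2 y z) (q (n1 - 1)%Z n2 y z)
        + g (q n1 n2 y z) (q n1 (n2 + 1)%Z y z)
        - ht (q n1 n2 y z) (q (n1 + 1)%Z (n2 + 1)%Z y z))
     = b (q n1 n2 y z)
       (- f (q n1 n2 y z) (q (n1 + 1)%Z n2 y z)
        + gt (q n1 n2 y z) (q n1 (n2 - 1)%Z y z)
        - h (q n1 n2 y z) (q (n1 - 1)%Z (n2 - 1)%Z y z)))
  (Hz : forall (n1 n2 : Z) (y z : R),
     is_derive (fun z' => q n1 n2 y z') z
       (c (q n1 n2 y z)
          (- ft (q n1 n2 y z) (q (n1 - 1)%Z n2 y z)
           - gt (q n1 n2 y z) (q n1 (n2 - 1)%Z y z)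
           + h (q n1 n2 y z) (q (n1 - 1)%Z (n2 - 1)%Z y z))))
  (Hz' : forall (n1 n2 : Z) (y z : R),
     c (q n1 n2 y z)
       (- ft (q n1 n2 y z) (q (n1 - 1)%Z n2 y z)
        - gt (q n1 n2 y z) (q n1 (n2 - 1)%Z y z)
        + h (q n1 n2 y z) (q (n1 - 1)%Z (n2 - 1)%Z y z))
     = c (q n1 n2 y z)
       (- f (q n1 n2 y z) (q (n1 + 1)%Z n2 y z)
        - g (q n1 n2 y z) (q n1 (n2 + 1)%Z y z)
        + ht (q n1 n2 y z) (q (n1 + 1)%Z (n2 + 1)%Z y z)))
  (j : Z) :
  forall (n : Z) (y z : R),
    let u := fun (m : Z) => zigzag q j (n + m)%Z y z in
    ex_derive (fun y' => zigzag q j n y' z) y /\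
    ex_derive (fun z' => zigzag q j n y z') z /\
    Derive (fun y' => zigzag q j n y' z) y + Derive (fun z' => zigzag q j n y z') z
    = b (u 0%Z) (- ft (u 0%Z) (u (-2)%Z) + g (u 0%Z) (u (-1)%Z) - gt (u 0%Z) (u 1%Z))
      + b (u 0%Z) (- f (u 0%Z) (u 2%Z) - g (u 0%Z) (u (-1)%Z) + gt (u 0%Z) (u 1%Z)).
Proof.
  intros n y z u; subst u; cbv beta.
  destruct (Z.Even_or_Odd n) as [[k ->]|[k ->]].
  - replace (2*k + 0)%Z with (2*k)%Z by ring.
    replace (2*k + -2)%Z with (2*(k-1))%Z by ring.
    replace (2*k + -1)%Z with (2*k-1)%Z by ring.
    replace (2*k + 1)%Z with (2*(k+1)-1)%Z by ring.
    replace (2*k + 2)%Z with (2*(k+1))%Z by ring.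
    rewrite !zz_e, !zz_o.
    pose proof (Hy k j y z) as Dy. pose proof (Hz k j y z) as Dz.
    split; [eexists; exact Dy|split; [eexists; exact Dz|]].
    assert (E1 : Derive (fun y' => q k j y' z) y = _) by exact (is_derive_unique _ _ _ Dy).
    assert (E2 : Derive (fun z' => q k j y z') z = _) by exact (is_derive_unique _ _ _ Dz).
    rewrite E1, E2.
    rewrite Hz', <- hbc, <- hgtht. reflexivity.
  - replace (2*k+1)%Z with (2*(k+1)-1)%Z by ring.
    set (m := (k+1)%Z).
    replace (2*m - 1 + 0)%Z with (2*m-1)%Z by ring.
    replace (2*m - 1 + -2)%Z with (2*(m-1)-1)%Z by ring.
    replace (2*m - 1 + -1)%Z with (2*(m-1))%Z by ring.
    replace (2*m - 1 + 1)%Z with (2*m)%Z by ring.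
    replace (2*m - 1 + 2)%Z with (2*(m+1)-1)%Z by ring.
    rewrite !zz_e, !zz_o.
    pose proof (Hy m (j+1)%Z y z) as Dy. pose proof (Hz m (j+1)%Z y z) as Dz.
    split; [eexists; exact Dy|split; [eexists; exact Dz|]].
    assert (E1 : Derive (fun y' => q m (j+1)%Z y' z) y = _) by exact (is_derive_unique _ _ _ Dy).
    assert (E2 : Derive (fun z' => q m (j+1)%Z y z') z = _) by exact (is_derive_unique _ _ _ Dz).
    rewrite E1, E2.
    rewrite Hy', <- hbc, <- !hgh.
    replace (j+1-1)%Z with j by ring.
    rewrite Rplus_comm; f_equal; f_equal; ring.
Qed.
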